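(* Let $q \geq 4$ be a prime power and let $\mathcal{E} = \{ \widetilde{E}(u) : u \in \mathcal{D}_q \}$. Then \[ \theta(\mathcal{E}) = \begin{cases} 2(q-1) & \text{if } q-1 \not\equiv 0 \pmod 3,\\ 0 & \text{if } q-1 \equiv 0 \pmod 3. \end{cases} \] Equivalently, $\min\{ |\widetilde{E}(u) \cap \widetilde{E}(v)| : u,v \in \mathcal{D}_q\}$ equals $2(q-1)$ if $3 \nmid q-1$ and equals $0$ if $3 \mid q-1$.
   Context: $\mathbb{F}_q$ is the finite field with $q$ elements. For $u=(u_1,u_2,u_3), v=(v_1,v_2,v_3) \in \mathbb{F}_q^3$ the Hamming distance is $d(u,v)=|\{i : u_i \neq v_i\}|$, and $B(u)=\{v \in \mathbb{F}_q^3 : d(u,v)\le 1\}$. The extended ball of $u$ is $E(u)=\bigcup_{\lambda \in \mathbb{F}_q} B(\lambda u)$. Let $\mathcal{D}_q=\{(u_1,u_2,u_3)\in\mathbb{F}_q^3 : u_1,u_2,u_3 \text{ pairwise distinct and nonzero}\}$ and $\widetilde{E}(u)=E(u)\cap \mathcal{D}_q$. A family $\mathcal{F}=\{A_1,\dots,A_m\}$ of sets is $t$-intersecting if $|A_i\cap A_j|\ge t$ for all $i\ne j$, and $\theta(\mathcal{F})=\max\{t : \mathcal{F} \text{ is } t\text{-intersecting}\}$ (i.e. the minimum of $|A_i\cap A_j|$ over pairs of members, here indexed by pairs $u,v\in\mathcal{D}_q$). *)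

(* Defs.v *)
From HB Require Import structures.
From mathcomp Require Import all_boot all_order all_algebra all_field.
Set Implicit Arguments. Unset Strict Implicit. Unset Printing Implicit Defensive.
Import GRing.Theory.
Local Open Scope ring_scope.

Definition vec3 (F : finFieldType) := {ffun 'I_3 -> F}.

Definition hdist (F : finFieldType) (u v : vec3 F) : nat :=
  #|[set i : 'I_3 | u i != v i]|.

Definition ball1 (F : finFieldType) (u : vec3 F) : {set vec3 F} :=
  [set v : vec3 F | (hdist u v <= 1)%N].

Definition scalev (F : finFieldType) (l : F) (u : vec3 F) : vec3 F :=
  [ffun i => l * u i].

Definition extball (F : finFieldType) (u : vec3 F) : {set vec3 F} :=
  \bigcup_(l : F) ball1 (scalev l u).

Definition Dq (F : finFieldType) : {set vec3 F} :=
  [set u : vec3 F | [forall i, u i != 0] &&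
                    [forall i, forall j, (i != j) ==> (u i != u j)]].

Definition extballD (F : finFieldType) (u : vec3 F) : {set vec3 F} :=
  extball u :&: Dq F.

(* Main.v *)
Require Import Defs.
From HB Require Import structures.
From mathcomp Require Import all_boot all_order all_algebra all_field all_solvable all_fingroup.
From mathcomp Require Import ring.
Set Implicit Arguments. Unset Strict Implicit. Unset Printing Implicit Defensive.
Import GRing.Theory.
Local Open Scope ring_scope.

Section S.
Variable F : finFieldType.
Definition i0 : 'I_3 := @Ordinal 3 0 isT.
Definition i1 : 'I_3 := @Ordinal 3 1 isT.
Definition i2 : 'I_3 := @Ordinal 3 2 isT.

Lemma ord3P (P : 'I_3 -> Prop) : P i0 -> P i1 -> P i2 -> forall i, P i.
Proof.
move=> H0 H1 H2 [[|[|[|n]]] Hn].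
- by have -> : Ordinal Hn = i0 by apply/val_inj.
- by have -> : Ordinal Hn = i1 by apply/val_inj.
- by have -> : Ordinal Hn = i2 by apply/val_inj.
- by [].
Qed.

Lemma hdistE (u v : vec3 F) :
  hdist u v = ((u i0 != v i0) + (u i1 != v i1) + (u i2 != v i2))%N.
Proof.
rewrite /hdist -sum1_card big_mkcond /= !big_ord_recl big_ord0 /= !inE addn0 addnA.
have -> : lift ord0 ord0 = i1 by apply/val_inj.
have -> : lift ord0 (lift ord0 ord0) = i2 by apply/val_inj.
have -> : (ord0 : 'I_3) = i0 by apply/val_inj.
by case: (u i0 != v i0); case: (u i1 != v i1); case: (u i2 != v i2).
Qed.

Lemma DqE (u : vec3 F) : (u \in Dq F) =
  [&& u i0 != 0, u i1 != 0, u i2 != 0, u i0 != u i1, u i0 != u i2 & u i1 != u i2].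
Proof.
rewrite inE; apply/idP/idP.
- case/andP=> /forallP H1 /forallP H2.
  have H3 : forall i j, i != j -> u i != u j by move=> i j; move/forallP: (H2 i) => /(_ j)/implyP.
  by rewrite !H1 !H3.
- case/andP=> a /andP[b] /andP[c] /andP[d] /andP[e f]; apply/andP; split.
  + by apply/forallP; apply: ord3P.
  + apply/forallP; apply: ord3P; apply/forallP; apply: ord3P => //=; rewrite eq_sym.
    all: by [].
Qed.
Definition rel (w u : vec3 F) : bool :=
  [|| w i0 * u i1 == w i1 * u i0, w i0 * u i2 == w i2 * u i0
    | w i1 * u i2 == w i2 * u i1].

Lemma scalevE l (u : vec3 F) i : scalev l u i = l * u i.
Proof. by rewrite ffunE. Qed.

Lemma extballE (u w : vec3 F) : u \in Dq F -> (w \in extball u) = rel w u.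
Proof.
rewrite DqE => /andP[n0 /andP[n1 /andP[n2 _]]].
apply/bigcupP/idP.
- case=> l _; rewrite inE hdistE !scalevE /rel.
  have K : forall i j, l * u i = w i -> l * u j = w j -> w i * u j == w j * u i.
    by move=> i j <- <-; rewrite mulrAC.
  case: (eqVneq (l * u i0) (w i0)) => E0; case: (eqVneq (l * u i1) (w i1)) => E1;
    case: (eqVneq (l * u i2) (w i2)) => E2; rewrite ?E0 ?E1 ?E2 ?eqxx //= => _.
  all: try by [rewrite (K i0 i1) | rewrite (K i0 i2) ?orbT | rewrite (K i1 i2) ?orbT].
- have key : forall i j, u i != 0 -> w i * u j = w j * u i ->
     w i / u i * u j = w j.
    by move=> i j ui e; rewrite mulrAC e mulfK.
  have H1 : forall b : bool, (b <= 1)%N by case.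
  case/or3P => /eqP e.
  + exists (w i0 / u i0) => //; rewrite inE hdistE !scalevE divfK // (key i0 i1) //.
    by rewrite !eqxx /= ?add0n ?addn0 leq_b1.
  + exists (w i0 / u i0) => //; rewrite inE hdistE !scalevE divfK // (key i0 i2) //.
    by rewrite !eqxx /= ?add0n ?addn0 leq_b1.
  + exists (w i1 / u i1) => //; rewrite inE hdistE !scalevE divfK // (key i1 i2) //.
    by rewrite !eqxx /= ?add0n ?addn0 leq_b1.
Qed.

Lemma extballDE (u w : vec3 F) : u \in Dq F ->
  (w \in extballD u) = (w \in Dq F) && rel w u.
Proof. by move=> uD; rewrite /extballD inE extballE // andbC. Qed.

Lemma Dq_scale l (a : vec3 F) : l != 0 -> a \in Dq F -> scalev l a \in Dq F.
Proof.
move=> l0; rewrite !DqE !scalevE => /andP[a0 /andP[a1 /andP[a2 /andP[d1 /andP[d2 d3]]]]].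
by rewrite !mulf_neq0 //= !(inj_eq (mulfI l0)) d1 d2 d3.
Qed.

Lemma rel_scalel l (w u : vec3 F) : l != 0 -> rel (scalev l w) u = rel w u.
Proof. by move=> l0; rewrite /rel !scalevE -!mulrA !(inj_eq (mulfI l0)). Qed.

Lemma rel_scaler c (w u : vec3 F) : c != 0 -> rel w (scalev c u) = rel w u.
Proof. by move=> c0; rewrite /rel !scalevE ![w _ * (c * _)]mulrCA !(inj_eq (mulfI c0)). Qed.

Definition Sline (a : vec3 F) : {set vec3 F} := [set scalev l a | l in [set~ (0:F)]].

Lemma card_Sline (a : vec3 F) : a i0 != 0 -> #|Sline a| = #|F|.-1.
Proof.
move=> a0; rewrite card_in_imset ?cardsC1 // => l m _ _ /ffunP /(_ i0).
by rewrite !ffunE => /(mulIf a0).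
Qed.

Lemma card_Sline2 (a b : vec3 F) : a i0 != 0 -> b i0 != 0 ->
  (forall c, b != scalev c a) -> #|Sline a :|: Sline b| = (2 * #|F|.-1)%N.
Proof.
move=> a0 b0 nab; rewrite cardsU !card_Sline // mul2n -addnn.
suff -> : Sline a :&: Sline b = set0 by rewrite cards0 subn0.
apply/setP => w; rewrite !inE; apply/negP => /andP[/imsetP[l _ ->] /imsetP[m]].
rewrite !inE => m0 e; move/negP: (nab (l / m)); apply; apply/eqP/ffunP => i.
move/ffunP: e => /(_ i); rewrite !ffunE => e.
apply: (mulfI m0).
by rewrite -e mulrA mulrCA divff // mulr1.
Qed.

Lemma Sline_sub (u v a : vec3 F) : u \in Dq F -> v \in Dq F -> a \in Dq F ->
  rel a u -> rel a v -> Sline a \subset extballD u :&: extballD v.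
Proof.
move=> uD vD aD au av; apply/subsetP => w /imsetP[l l0 ->]; have {}l0 : l != 0 by move: l0; rewrite !inE.
by apply/setIP; split; rewrite extballDE // Dq_scale // rel_scalel.
Qed.

Lemma lower2 (u v a b : vec3 F) : u \in Dq F -> v \in Dq F -> a \in Dq F -> b \in Dq F ->
  rel a u -> rel a v -> rel b u -> rel b v -> (forall c, b != scalev c a) ->
  (2 * #|F|.-1 <= #|extballD u :&: extballD v|)%N.
Proof.
move=> uD vD aD bD au av bu bv nab.
have a0 : a i0 != 0 by move: aD; rewrite DqE => /andP[].
have b0 : b i0 != 0 by move: bD; rewrite DqE => /andP[].
rewrite -(card_Sline2 a0 b0 nab); apply: subset_leq_card.
by rewrite subUset !Sline_sub.
Qed.

Definition mk3 (a b c : F) : vec3 F :=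
  [ffun i : 'I_3 => if val i == 0%N then a else if val i == 1%N then b else c].

Lemma mk3E0 a b c : mk3 a b c i0 = a. Proof. by rewrite ffunE. Qed.
Lemma mk3E1 a b c : mk3 a b c i1 = b. Proof. by rewrite ffunE. Qed.
Lemma mk3E2 a b c : mk3 a b c i2 = c. Proof. by rewrite ffunE. Qed.
Definition mk3E := (mk3E0, mk3E1, mk3E2).

Lemma vecE (x : vec3 F) : x = mk3 (x i0) (x i1) (x i2).
Proof. by apply/ffunP; apply: ord3P; rewrite mk3E. Qed.

Lemma mk3_inj a b c a' b' c' : mk3 a b c = mk3 a' b' c' -> [/\ a = a', b = b' & c = c'].
Proof. by move/ffunP=> H; move: (H i0) (H i1) (H i2); rewrite !mk3E. Qed.

Lemma scale3 l a b c : scalev l (mk3 a b c) = mk3 (l * a) (l * b) (l * c).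
Proof. by apply/ffunP; apply: ord3P; rewrite scalevE !mk3E. Qed.

Lemma DqE3 a b c : (mk3 a b c \in Dq F) = [&& a != 0, b != 0, c != 0, a != b, a != c & b != c].
Proof. by rewrite DqE !mk3E. Qed.

Lemma relE3 a b c x y z : rel (mk3 a b c) (mk3 x y z) = [|| a*y == b*x, a*z == c*x | b*z == c*y].
Proof. by rewrite /rel !mk3E. Qed.

Lemma nprop3 a b c x y z : (forall l, ~ [/\ x = l * a, y = l * b & z = l * c]) ->
  forall l, mk3 x y z != scalev l (mk3 a b c).
Proof. by move=> H l; rewrite scale3; apply/negP => /eqP/mk3_inj[*]; apply: (H l). Qed.

Lemma cube_inj (x y : F) : (#|F|.-1 %% 3 != 0)%N -> x ^+ 3 = y ^+ 3 -> x = y.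
Proof.
move=> q3 e.
have [y0|y0] := eqVneq y 0.
  by move: e; rewrite y0 expr0n /= => /eqP; rewrite expf_eq0 /= => /eqP.
pose r := x / y.
have r3 : r ^+ 3 = 1 by rewrite /r expr_div_n e divff // expf_neq0.
have r0 : r != 0 by apply/eqP => r0; move: r3; rewrite r0 expr0n /= => /eqP; rewrite eq_sym oner_eq0.
have rq : r ^+ #|F|.-1 = 1.
  apply: (mulIf r0); rewrite mul1r -exprSr prednK ?expf_card //.
  by apply/card_gt0P; exists 0.
move: rq; rewrite (div.divn_eq (#|F|.-1) 3) exprD mulnC exprM r3 expr1n mul1r.
have : (#|F|.-1 %% 3 < 3)%N by rewrite ltn_mod.
move: q3; case: (#|F|.-1 %% 3)%N => [|[|[|]]] //= _ _.
- by rewrite expr1 => r1; rewrite -[x](divfK y0) -/r r1 mul1r.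
- move=> r2; have r1 : r = 1 by rewrite -r3 exprS r2 mulr1.
  by rewrite -[x](divfK y0) -/r r1 mul1r.
Qed.

Lemma neqM1 (a b c : F) : c != 0 -> a != b -> a * c != b * c.
Proof. by move=> c0; apply: contra_neq => /(mulIf c0). Qed.
Lemma neqM2 (a b c : F) : c != 0 -> a != b -> c * a != c * b.
Proof. by move=> c0; apply: contra_neq => /(mulfI c0). Qed.
Lemma neqM3 (a b c : F) : c != 0 -> a != b -> a * c != c * b.
Proof. by move=> c0 ab; rewrite [c * b]mulrC neqM1. Qed.
Lemma neqM4 (a b c : F) : c != 0 -> a != b -> c * a != b * c.
Proof. by move=> c0 ab; rewrite [c * a]mulrC neqM1. Qed.

Ltac neqtac := first [ apply: neqM1 | apply: neqM2 | apply: neqM3 | apply: neqM4 ];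
  first [ done | by rewrite eq_sym ].

Lemma linc (a b x y p q r w : F) : p = q -> r = w ->
  x - y = a * (p - q) + b * (r - w) -> x = y.
Proof. by move=> -> -> /eqP; rewrite !subrr !mulr0 addr0 subr_eq0 => /eqP. Qed.

Ltac lint h1 h2 := first [ solve [apply: (linc (a:=1) (b:=1) h1 h2); ring] | solve [apply: (linc (a:=1) (b:=-1) h1 h2); ring]
  | solve [apply: (linc (a:=-1) (b:=1) h1 h2); ring] | solve [apply: (linc (a:=-1) (b:=-1) h1 h2); ring] ].

Ltac relt := rewrite relE3; apply/or3P;
  first [ apply: Or31; apply/eqP; ring | apply: Or32; apply/eqP; ring | apply: Or33; apply/eqP; ring ].

Lemma pairA (u0 u1 u2 v0 v1 v2 l : F) : u0 != 0 -> u1 != 0 -> u2 != 0 ->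
  [/\ u0 * v0 = l * (v0 * u2), v1 * u0 = l * (u1 * v2) & u2 * v0 = l * (u2 * v2)] ->
  v0 != 0 ->
  [/\ v0 * u1 = v1 * u0, v0 * u2 = v2 * u0 & v1 * u2 = v2 * u1].
Proof.
move=> n0 n1 n2 [e0 e1 e2] m0.
have f2 : v0 = l * v2 by apply: (mulfI n2); ring: e2.
have f0 : u0 = l * u2 by apply: (mulIf m0); ring: e0.
have l0 : l != 0 by apply: contra_neq n0 => l0; rewrite f0 l0 mul0r.
split.
- by rewrite e1 f2; ring.
- by rewrite f2 f0; ring.
- apply: (mulfI l0); have := e1; rewrite f0 => e1'; ring: e1'.
Qed.

Lemma final_contra (q3 : (#|F|.-1 %% 3 != 0)%N) (u0 u1 u2 v0 v1 v2 : F) :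
  u0 != 0 -> v1 != v2 ->
  u0*v1 = u1*v2 -> u0*v1 = u2*v0 -> u0*v2 = u1*v0 -> u0*v2 = u2*v1 -> False.
Proof.
move=> n0 m12 h1 h2 h3 h4.
have : (u0 * v1) ^+ 3 = (u0 * v2) ^+ 3.
  have -> : (u0*v1)^+3 = (u0*v1)*(u1*v2)*(u2*v0) by rewrite -h1 -h2; ring.
  have -> : (u0*v2)^+3 = (u0*v2)*(u1*v0)*(u2*v1) by rewrite -h3 -h4; ring.
  ring.
by move/(cube_inj q3)/(mulfI n0)/eqP; rewrite (negPf m12).
Qed.

Lemma lower_nd (q3 : (#|F|.-1 %% 3 != 0)%N) (q5 : (4 < #|F|)%N) (u0 u1 u2 v0 v1 v2 : F) :
  mk3 u0 u1 u2 \in Dq F -> mk3 v0 v1 v2 \in Dq F ->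
  (2 * #|F|.-1 <= #|extballD (mk3 u0 u1 u2) :&: extballD (mk3 v0 v1 v2)|)%N.
Proof.
move=> uD vD; have := uD; have := vD; rewrite !DqE3.
case/andP=> m0 /andP[m1 /andP[m2 /andP[m01 /andP[m02 m12]]]].
case/andP=> n0 /andP[n1 /andP[n2 /andP[n01 /andP[n02 n12]]]].
case: (boolP [&& v0*u1 == v1*u0, v0*u2 == v2*u0 & v1*u2 == v2*u1]) => [/and3P[/eqP p1 /eqP p2 _] | npr].
  pose c := v0 / u0.
  have c0 : c != 0 by rewrite mulf_neq0 ?invr_neq0.
  have vE : mk3 v0 v1 v2 = scalev c (mk3 u0 u1 u2).
    rewrite scale3 /c divfK //; congr mk3; apply: (mulIf n0); rewrite mulrAC divfK //.
  have [t tn] : exists t, t \notin [:: 0; u0; u1; u2].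
    apply/existsP; apply: contraTT q5 => /existsPn H; rewrite -leqNgt.
    apply: leq_trans (card_size [:: 0; u0; u1; u2]).
    by apply: subset_leq_card; apply/subsetP => x _; move: (H x); rewrite negbK.
  move: tn; rewrite !inE !negb_or => /andP[t0 /andP[t1 /andP[t2 t3]]].
  apply: (lower2 (a := mk3 u0 u1 u2) (b := mk3 u0 u1 t)) => //.
  - by rewrite DqE3 n0 n1 n01 !(eq_sym _ t) t0 t1 t2.
  - by relt.
  - by rewrite vE rel_scaler //; relt.
  - by relt.
  - by rewrite vE rel_scaler //; relt.
  apply: nprop3 => l [e0 e1 e2].
  have l1 : l = 1 by apply: (mulIf n0); rewrite -e0 mul1r.
  by move: t3; rewrite e2 l1 mul1r eqxx.
pose pA0 := mk3 (v0*u2) (u1*v2) (u2*v2).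
pose pA1 := mk3 (u0*v0) (v1*u0) (u2*v0).
pose pA2 := mk3 (u0*v1) (u1*v1) (v2*u1).
pose pB0 := mk3 (u0*v2) (v1*u2) (v2*u2).
pose pB1 := mk3 (v0*u0) (u1*v0) (v2*u0).
pose pB2 := mk3 (v0*u1) (v1*u1) (u2*v1).
have cnt : forall h1 h2 h3 : Prop, (h1 -> h2 -> h3 -> [&& v0*u1 == v1*u0, v0*u2 == v2*u0 & v1*u2 == v2*u1]) -> h1 -> h2 -> h3 -> False.
  by move=> h1 h2 h3 H x y z; move/negP: npr; apply; apply: H.
have okA01 : v0*u2 != u1*v2 -> v1*u0 != u2*v0 -> (2 * #|F|.-1 <= #|extballD (mk3 u0 u1 u2) :&: extballD (mk3 v0 v1 v2)|)%N.
  { move=> c1 c2; apply: (lower2 (a := pA0) (b := pA1)) => //.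
  all: try (rewrite DqE3; repeat (apply/andP; split); first [ exact c1 | exact c2 | by apply: mulf_neq0 | neqtac ]).
  all: try by relt.
  apply: nprop3 => l E; case: (pairA n0 n1 n2 E m0) => h1 h2 h3.
  by apply: (cnt _ _ _ _ h1 h2 h3) => {}h1 {}h2 {}h3; apply/and3P; split; apply/eqP. }
have okA12 : v1*u0 != u2*v0 -> u0*v1 != v2*u1 -> (2 * #|F|.-1 <= #|extballD (mk3 u0 u1 u2) :&: extballD (mk3 v0 v1 v2)|)%N.
  { move=> c1 c2; apply: (lower2 (a := pA1) (b := pA2)) => //.
  all: try (rewrite DqE3; repeat (apply/andP; split); first [ exact c1 | exact c2 | by apply: mulf_neq0 | neqtac ]).
  all: try by relt.
  apply: nprop3 => l [e0 e1 e2]; case: (pairA n1 n2 n0 (And3 e1 e2 e0) m1) => h1 h2 h3.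
  by apply: (cnt _ _ _ _ h1 h2 h3) => {}h1 {}h2 {}h3; apply/and3P; split; apply/eqP; first [ring: h1 | ring: h2 | ring: h3]. }
have okA20 : u0*v1 != v2*u1 -> v0*u2 != u1*v2 -> (2 * #|F|.-1 <= #|extballD (mk3 u0 u1 u2) :&: extballD (mk3 v0 v1 v2)|)%N.
  { move=> c1 c2; apply: (lower2 (a := pA2) (b := pA0)) => //.
  all: try (rewrite DqE3; repeat (apply/andP; split); first [ exact c1 | exact c2 | by apply: mulf_neq0 | neqtac ]).
  all: try by relt.
  apply: nprop3 => l [e0 e1 e2]; case: (pairA n2 n0 n1 (And3 e2 e0 e1) m2) => h1 h2 h3.
  by apply: (cnt _ _ _ _ h1 h2 h3) => {}h1 {}h2 {}h3; apply/and3P; split; apply/eqP; first [ring: h1 | ring: h2 | ring: h3]. }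
have okB01 : u0*v2 != v1*u2 -> u1*v0 != v2*u0 -> (2 * #|F|.-1 <= #|extballD (mk3 u0 u1 u2) :&: extballD (mk3 v0 v1 v2)|)%N.
  { move=> c1 c2; apply: (lower2 (a := pB0) (b := pB1)) => //.
  all: try (rewrite DqE3; repeat (apply/andP; split); first [ exact c1 | exact c2 | by apply: mulf_neq0 | neqtac ]).
  all: try by relt.
  apply: nprop3 => l [e0 e1 e2]; case: (pairA m0 m1 m2 (And3 e0 e1 e2) n0) => h1 h2 h3.
  by apply: (cnt _ _ _ _ h1 h2 h3) => {}h1 {}h2 {}h3; apply/and3P; split; apply/eqP; first [ring: h1 | ring: h2 | ring: h3]. }
have okB12 : u1*v0 != v2*u0 -> v0*u1 != u2*v1 -> (2 * #|F|.-1 <= #|extballD (mk3 u0 u1 u2) :&: extballD (mk3 v0 v1 v2)|)%N.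
  { move=> c1 c2; apply: (lower2 (a := pB1) (b := pB2)) => //.
  all: try (rewrite DqE3; repeat (apply/andP; split); first [ exact c1 | exact c2 | by apply: mulf_neq0 | neqtac ]).
  all: try by relt.
  apply: nprop3 => l [e0 e1 e2]; case: (pairA m1 m2 m0 (And3 e1 e2 e0) n1) => h1 h2 h3.
  by apply: (cnt _ _ _ _ h1 h2 h3) => {}h1 {}h2 {}h3; apply/and3P; split; apply/eqP; first [ring: h1 | ring: h2 | ring: h3]. }
have okB20 : v0*u1 != u2*v1 -> u0*v2 != v1*u2 -> (2 * #|F|.-1 <= #|extballD (mk3 u0 u1 u2) :&: extballD (mk3 v0 v1 v2)|)%N.
  { move=> c1 c2; apply: (lower2 (a := pB2) (b := pB0)) => //.
  all: try (rewrite DqE3; repeat (apply/andP; split); first [ exact c1 | exact c2 | by apply: mulf_neq0 | neqtac ]).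
  all: try by relt.
  apply: nprop3 => l [e0 e1 e2]; case: (pairA m2 m0 m1 (And3 e2 e0 e1) n2) => h1 h2 h3.
  by apply: (cnt _ _ _ _ h1 h2 h3) => {}h1 {}h2 {}h3; apply/and3P; split; apply/eqP; first [ring: h1 | ring: h2 | ring: h3]. }
have grpB : v0*u2 = u1*v2 -> v1*u0 = u2*v0 -> u0*v1 = v2*u1 -> (2 * #|F|.-1 <= #|extballD (mk3 u0 u1 u2) :&: extballD (mk3 v0 v1 v2)|)%N.
  { move=> eA0 eA1 eA2.
  have f1 : u0*v1 = u1*v2 by ring: eA2.
  have f2 : u0*v1 = u2*v0 by ring: eA1.
  case: (eqVneq (u0*v2) (v1*u2)) => B0; case: (eqVneq (u1*v0) (v2*u0)) => B1;
    case: (eqVneq (v0*u1) (u2*v1)) => B2.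
  all: try by apply: okB01.
  all: try by apply: okB12.
  all: try by apply: okB20.
  all: exfalso.
  - have := final_contra q3 n0 m12 f1 f2. move=> H. apply: H. ring: B1. ring: B0.
  - by move/eqP: B2; apply; lint B0 B1.
  - by move/eqP: B1; apply; lint B0 B2.
  - move/eqP: B0; apply; transitivity (v2*u0); first ring.
    rewrite -B1; transitivity (v0*u1); first ring.
    by rewrite B2; ring. }
case: (eqVneq (v0*u2) (u1*v2)) => A0; case: (eqVneq (v1*u0) (u2*v0)) => A1;
  case: (eqVneq (u0*v1) (v2*u1)) => A2.
all: try by apply: okA01.
all: try by apply: okA12.
all: try by apply: okA20.
- by apply: grpB.
- by exfalso; move/eqP: A2; apply; lint A0 A1.
- by exfalso; move/eqP: A1; apply; lint A0 A2.
- by exfalso; move/eqP: A0; apply; lint A1 A2.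
Qed.

Lemma cube_root (q3 : (#|F|.-1 %% 3 == 0)%N) : exists w : F, w ^+ 3 = 1 /\ w != 1.
Proof.
have p3 : prime 3 by [].
have d3 : (3 %| #|setT_group {unit F}|)%N by rewrite /= card_finField_unit /dvdn.
case: (Cauchy p3 d3) => x _ ox.
exists (val x); split.
  by rewrite -FinRing.val_unitX -ox expg_order.
apply/negP => /eqP x1.
have : x = 1%g by apply: val_inj; rewrite x1.
by move=> e; move: ox; rewrite e order1.
Qed.

Lemma wit_div (q3 : (#|F|.-1 %% 3 == 0)%N) : exists u v : vec3 F,
  [/\ u \in Dq F, v \in Dq F & #|extballD u :&: extballD v| = 0%N].
Proof.
case: (cube_root q3) => w [w3 w1].
have w0 : w != 0 by apply: contra_eq_neq w3 => ->; rewrite expr0n eq_sym oner_eq0.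
have w3' : w * w * w = 1 by rewrite -w3 !exprS expr0 mulr1 mulrA.
have w2 : w * w != 1.
  by apply: contra_neq w1 => e; rewrite -w3' e mul1r.
have ww : w * w != w.
  by apply: contra_neq w1 => e; apply: (mulfI w0); rewrite mulr1.
have ww0 : w * w != 0 by rewrite mulf_neq0.
have uD : mk3 1 w (w * w) \in Dq F.
  by rewrite DqE3; repeat (apply/andP; split); first [done | by rewrite eq_sym | by rewrite mulf_neq0 | by rewrite oner_eq0].
have vD : mk3 w 1 (w * w) \in Dq F.
  by rewrite DqE3; repeat (apply/andP; split); first [done | by rewrite eq_sym | by rewrite mulf_neq0 | by rewrite oner_eq0].
exists (mk3 1 w (w * w)), (mk3 w 1 (w * w)); split => //.
apply/eqP; rewrite cards_eq0; apply/eqP/setP => x; rewrite in_set0.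
apply/negP => /setIP[]; rewrite (vecE x) !extballDE //.
move=> /andP[xD U] /andP[_ V]; move: xD U V.
rewrite DqE3 !relE3 ?mulr1 ?mul1r.
case/andP=> x0 /andP[x1 /andP[x2 /andP[x01 /andP[x02 x12]]]].
move=> /or3P[/eqP U|/eqP U|/eqP U] /or3P[/eqP V|/eqP V|/eqP V].
- by move/eqP: w2; apply; apply: (mulfI x0); rewrite mulr1; apply: (linc (a:=w) (b:=-1) U V); ring.
- by move/eqP: x12; apply; apply: (mulIf w0); apply: (linc (a:=-w) (b:=1) U V); ring.
- move/eqP: x02; apply; rewrite -[x i0]mulr1 -w3'; symmetry; apply: (linc (a:=-(w*w)) (b:=-1) U V); ring.
- move/eqP: x12; apply; rewrite -[x i1]mulr1 -w3'; symmetry; apply: (linc (a:=-1) (b:=w*w) U V); ring.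
- by move/eqP: w1; apply; apply: (mulfI x2); rewrite mulr1; apply: (linc (a:=1) (b:=-1) U V); ring.
- by move/eqP: x01; apply; apply: (mulIf ww0); apply: (linc (a:=1) (b:=-1) U V); ring.
- by move/eqP: x02; apply; apply: (mulIf w0); apply: (linc (a:=1) (b:=w) U V); ring.
- by move/eqP: x01; apply; apply: (mulIf ww0); symmetry; apply: (linc (a:=1) (b:=-1) U V); ring.
- by move/eqP: w1; apply; apply: (mulfI x2); rewrite mulr1; apply: (linc (a:=-1) (b:=1) U V); ring.
Qed.

Lemma wit_nd (q3 : (#|F|.-1 %% 3 != 0)%N) (Hq : (4 <= #|F|)%N) : exists u v : vec3 F,
  [/\ u \in Dq F, v \in Dq F & #|extballD u :&: extballD v| = (2 * #|F|.-1)%N].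
Proof.
have [r rn] : exists r : F, r \notin [:: 0; 1; -1].
  apply/existsP; apply: contraLR Hq => /existsPn H; rewrite -ltnNge ltnS.
  apply: leq_trans (card_size [:: 0; 1; -1]).
  by apply: subset_leq_card; apply/subsetP => x _; move: (H x); rewrite negbK.
move: rn; rewrite !inE !negb_or => /andP[r0 /andP[r1 rm1]].
have rr1 : r * r != 1 by rewrite -expr2 sqrf_eq1 negb_or r1.
have rr_r : r * r != r by apply: contra_neq r1 => e; apply: (mulfI r0); rewrite mulr1.
have r3 : r * r * r != 1.
  apply: contra_neq r1 => e; apply: (cube_inj q3); rewrite expr1n -e !exprS expr0 mulr1 mulrA //.
have r3r : r * r * r != r by apply: contra_neq rr1 => e; apply: (mulIf r0); rewrite mul1r.
have rr0 : r * r != 0 by rewrite mulf_neq0.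
have rrr0 : r * r * r != 0 by rewrite !mulf_neq0.
have uD : mk3 r 1 (r * r) \in Dq F.
  by rewrite DqE3; repeat (apply/andP; split); first [done | by rewrite eq_sym | by rewrite oner_eq0].
have vD : mk3 1 r (r * r) \in Dq F.
  by rewrite DqE3; repeat (apply/andP; split); first [done | by rewrite eq_sym | by rewrite oner_eq0].
have aD : mk3 1 r (r * r * r) \in Dq F.
  by rewrite DqE3; repeat (apply/andP; split); first [done | by rewrite eq_sym | by rewrite oner_eq0].
have bD : mk3 r 1 (r * r * r) \in Dq F.
  by rewrite DqE3; repeat (apply/andP; split); first [done | by rewrite eq_sym | by rewrite oner_eq0].
exists (mk3 r 1 (r * r)), (mk3 1 r (r * r)); split => //.
have -> : extballD (mk3 r 1 (r * r)) :&: extballD (mk3 1 r (r * r)) =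
   Sline (mk3 1 r (r * r * r)) :|: Sline (mk3 r 1 (r * r * r)).
  apply/eqP; rewrite eqEsubset; apply/andP; split; last first.
    by rewrite subUset !Sline_sub //; relt.
  apply/subsetP => x /setIP[]; rewrite (vecE x) !extballDE //.
  move=> /andP[xD U] /andP[_ V]; move: xD U V.
  rewrite DqE3 !relE3 ?mulr1 ?mul1r.
  case/andP=> x0 /andP[x1 /andP[x2 /andP[x01 /andP[x02 x12]]]].
  move=> /or3P[/eqP U|/eqP U|/eqP U] /or3P[/eqP V|/eqP V|/eqP V].
  - by exfalso; move/eqP: rr1; apply; apply: (mulfI x1); rewrite mulr1; apply: (linc (a:=-r) (b:=1) U V); ring.
  - apply/setUP; right; apply/imsetP; exists (x i1); first by rewrite !inE.
    rewrite scale3 mulr1; congr mk3 => //; apply: (linc (a:=r*r) (b:=-1) U V); ring.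
  - by exfalso; move/eqP: x02; apply; apply: (mulIf r0); apply: (linc (a:=r) (b:=1) U V); ring.
  - by exfalso; move/eqP: x12; apply; apply: (mulIf r0); apply: (linc (a:=1) (b:=-r) U V); ring.
  - by exfalso; move/eqP: r1; apply; apply: (mulfI x2); rewrite mulr1; apply: (linc (a:=-1) (b:=1) U V); ring.
  - by exfalso; move/eqP: x01; apply; apply: (mulIf rr0); apply: (linc (a:=1) (b:=-1) U V); ring.
  - apply/setUP; left; apply/imsetP; exists (x i0); first by rewrite !inE.
    rewrite scale3 mulr1; congr mk3 => //; apply: (linc (a:=-1) (b:=-(r*r)) U V); ring.
  - by exfalso; move/eqP: x01; apply; apply: (mulIf rr0); symmetry; apply: (linc (a:=1) (b:=-1) U V); ring.
  - by exfalso; move/eqP: r1; apply; apply: (mulfI x2); rewrite mulr1; apply: (linc (a:=1) (b:=-1) U V); ring.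
apply: card_Sline2; rewrite ?mk3E ?oner_eq0 //.
apply: nprop3 => l [e0 e1 e2]; move/eqP: rr1; apply.
by rewrite e1 e0 mulr1.
Qed.

End S.

Close Scope ring_scope.

Theorem theorem1 (F : finFieldType) (Hq : (4 <= #|F|)%N) :
  let t := if (#|F|.-1 %% 3 == 0)%N then 0%N else (2 * #|F|.-1)%N in
  (forall u v : vec3 F, u \in Dq F -> v \in Dq F ->
     (t <= #|extballD u :&: extballD v|)%N) /\
  (exists u v : vec3 F, [/\ u \in Dq F, v \in Dq F &
     #|extballD u :&: extballD v| = t]).
Proof.
move=> t; split.
- move=> u v uD vD; rewrite /t; case: ifP => h //.
  have q5 : (4 < #|F|)%N.
    rewrite ltn_neqAle Hq andbT; apply/negP => /eqP e; move: h; rewrite -e.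
    by [].
  rewrite (vecE u) (vecE v) in uD vD *; apply: lower_nd => //; by rewrite h.
- rewrite /t; case: ifP => h; first exact: wit_div.
  by apply: wit_nd => //; rewrite h.
Qed.
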